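(* Let $p$ be a prime, $n\ge 1$, and let $F\otimes_{ku_*}ku_*(\mathbb{Z}_{p^n})$ and the elements $[a,b]$ be as described in the context. For every integer $k\ge 0$, every integer $a$ and every integer $b$ with $1\le b\le (k+1)g_1$, where $g_1=p-1$, one has $$p^{n+k}[a,b]=0 \quad\text{in } F\otimes_{ku_*}ku_*(\mathbb{Z}_{p^n}).$$
   Context: Fix a prime $p$. Let $ku_*=\mathbb{Z}_{(p)}[v]$ be the $p$-local coefficient ring of connective complex $K$-theory, $v$ of degree $2$. Write $g_i=p^i-1$. For $m\ge1$ and $0\le t\le p^m-1$ put $a_{t,m}=\binom{p^m}{t+1}v^t\in ku_*$ (the coefficients of the $[p^m]$-series $[p^m](x)=\sum_t a_{t,m}x^{t+1}$). The reduced homology $ku_*(\mathbb{Z}_{p^n})$ (of $B\mathbb{Z}/p^n$) is the $ku_*$-module generated by classes $e_j$, $j\ge1$, subject to the relations $\sum_{t=0}^{p^n-1}a_{t,n}e_{j-t}=0$ for all $j\ge1$, where $e_h=0$ for $h\le 0$. Let $F=\bigoplus_{i\ge1}ku_*\alpha_i$ be the free $ku_*$-module on generators $\alpha_i$, with $\alpha_h=0$ for $h\le0$. For integers $i,j$ write $[i,j]=\alpha_i\otimes e_j\in F\otimes_{ku_*}ku_*(\mathbb{Z}_{p^n})$ (so $[i,j]=0$ if $i\le0$ or $j\le0$), and $c[i,j]=c\,\alpha_i\otimes e_j$ for $c\in ku_*$. *)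

(* Defs.v *)
From mathcomp Require Import all_boot all_algebra.
Import GRing.Theory Num.Theory.
Set Implicit Arguments. Unset Strict Implicit. Unset Printing Implicit Defensive.
Local Open Scope ring_scope.

(* ku_* = Z_(p)[v] is modelled as the subring of {poly rat} ('X = v) of
   polynomials all of whose coefficients lie in Z_(p) (denominator prime to p). *)
Definition zloc (p : nat) (q : rat) : bool := ~~ (p %| `|denq q|)%N.
Definition in_ku (p : nat) (P : {poly rat}) : bool := all (zloc p) P.

Definition acoef (p m t : nat) : {poly rat} := ('C(p ^ m, t.+1))%:R *: 'X^t.

(* Elements of the free ku_*-module on the symbols alpha_i (x) e_j, i,j integers,
   given by their coefficient function.  gen c i j = c[i,j], which is 0 unless
   i >= 1 and j >= 1. *)
Definition elt := int -> int -> {poly rat}.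
Definition gen (c : {poly rat}) (i j : int) : elt :=
  fun x y => if [&& x == i, y == j, 0 < i & 0 < j] then c else 0.

(* c * (alpha_i (x) relation_j) = sum_{t=0}^{p^n-1} c a_{t,n} [i, j-t] *)
Definition rel (p n : nat) (c : {poly rat}) (i j : int) : elt :=
  fun x y => \sum_(t < p ^ n) gen (c * acoef p n t) i (j - t%:Z) x y.

(* F (x)_{ku_*} ku_*(Z_{p^n}) is the quotient of the free module on the [i,j]
   (i,j >= 1) by the ku_*-submodule generated by the alpha_i (x) relation_j.
   [tensor_zero p n z] : z lies in that submodule, i.e. z = 0 in the tensor product. *)
Definition tensor_zero (p n : nat) (z : elt) : Prop :=
  exists s : seq (int * int * {poly rat}),
    all (fun r => in_ku p r.2) s /\
    forall x y, z x y = \sum_(r <- s) rel p n r.2 r.1.1 r.1.2 x y.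

(* Main.v *)
Require Import Defs.
From mathcomp Require Import all_boot all_order all_algebra.
From mathcomp Require Import zify ring.
Import Order.TTheory GRing.Theory Num.Theory.
Local Open Scope ring_scope.

Lemma den_div (m d : int) : d != 0 -> (`|denq (m%:~R / d%:~R)| %| `|d|)%N.
Proof.
move=> d0; case: divqP => [E|k x _]; first by rewrite E eqxx in d0.
by rewrite abszM dvdn_mull.
Qed.

Lemma zloc_frac p (m d : int) : d != 0 -> ~~ (p %| `|d|)%N -> zloc p (m%:~R / d%:~R).
Proof. move=> d0 nd; rewrite /zloc; apply: contra nd => H; exact: dvdn_trans H (den_div m d d0). Qed.

Lemma zlocM p x y : prime p -> zloc p x -> zloc p y -> zloc p (x * y).
Proof.
move=> pp zx zy.
have ->: x * y = (numq x * numq y)%:~R / (denq x * denq y)%:~R.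
  by rewrite !rmorphM /= -mulf_div !divq_num_den.
apply: zloc_frac; first by rewrite mulf_neq0.
by rewrite abszM Euclid_dvdM // negb_or; apply/andP; split.
Qed.

Lemma zloc0 p : prime p -> zloc p 0.
Proof. move=> pp; rewrite /zloc; have ->: denq 0 = 1 by []. by rewrite /= dvdn1; case: p pp => [|[|]]. Qed.

Lemma zlocN p x : zloc p (- x) = zloc p x.
Proof. by rewrite /zloc denqN. Qed.

Lemma zloc_nat p (m : nat) : prime p -> zloc p m%:R.
Proof. move=> pp; rewrite /zloc -[m%:R]/((m%:Z)%:~R) denq_int /= dvdn1; by case: p pp => [|[|]]. Qed.

Lemma in_kuP p (P : {poly rat}) : prime p -> reflect (forall i, zloc p P`_i) (in_ku p P).
Proof.
move=> pp; apply: (iffP (all_nthP 0)) => H i.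
  by case: (ltnP i (size P)) => hi; [apply: H | rewrite nth_default // zloc0].
by move=> _; apply: H.
Qed.

Section TZ.
Variables (p n : nat).
Hypothesis pp : prime p.

Lemma tz_ext (z1 z2 : elt) : (forall x y, z1 x y = z2 x y) -> tensor_zero p n z1 -> tensor_zero p n z2.
Proof. by move=> E [s [Hs Hz]]; exists s; split => // x y; rewrite -E. Qed.

Lemma tz0 : tensor_zero p n (fun _ _ => 0).
Proof. by exists [::]; split => // x y; rewrite big_nil. Qed.

Lemma tzD (z1 z2 : elt) : tensor_zero p n z1 -> tensor_zero p n z2 ->
  tensor_zero p n (fun x y => z1 x y + z2 x y).
Proof.
move=> [s1 [H1 E1]] [s2 [H2 E2]]; exists (s1 ++ s2); split.
  by rewrite all_cat H1 H2.
by move=> x y; rewrite big_cat /= E1 E2.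
Qed.

Lemma in_kuN (c : {poly rat}) : in_ku p (- c) = in_ku p c.
Proof.
apply/(in_kuP _ _ pp)/(in_kuP _ _ pp) => H i; first by rewrite -zlocN -coefN.
by rewrite coefN zlocN.
Qed.

Lemma relN c i j x y : Defs.rel p n (- c) i j x y = - Defs.rel p n c i j x y.
Proof.
rewrite /rel -sumrN; apply: eq_bigr => t _; rewrite /gen.
by case: ifP; rewrite ?mulNr ?oppr0.
Qed.

Lemma tzN (z : elt) : tensor_zero p n z -> tensor_zero p n (fun x y => - z x y).
Proof.
move=> [s [H E]]; exists (map (fun r => (r.1, - r.2)) s); split.
  by rewrite all_map; apply: sub_all H => r /=; rewrite in_kuN.
by move=> x y; rewrite E big_map -sumrN; apply: eq_bigr => r _ /=; rewrite relN.
Qed.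

Lemma tz_rel c i j : in_ku p c -> tensor_zero p n (Defs.rel p n c i j).
Proof. by move=> H; exists [:: (i, j, c)]; split; rewrite /= ?H // => x y; rewrite big_seq1. Qed.

Lemma tz_sum N (F : nat -> elt) : (forall t, (t < N)%N -> tensor_zero p n (F t)) ->
  tensor_zero p n (fun x y => \sum_(t < N) F t x y).
Proof.
elim: N => [|N IH] H.
  by apply: tz_ext tz0 => x y; rewrite big_ord0.
apply: (@tz_ext (fun x y => \sum_(t < N) F t x y + F N x y)).
  by move=> x y; rewrite big_ord_recr.
by apply: tzD; [apply: IH => t Ht; apply: H; apply: ltnW | apply: H].
Qed.

End TZ.

Lemma sum_first (R : zmodType) N (G : nat -> R) : (0 < N)%N ->
  \sum_(t < N) G t = G 0%N + \sum_(t < N.-1) G t.+1.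
Proof. by case: N => // N _; rewrite big_ord_recl. Qed.

Lemma bern p v : (1 < p)%N -> (v * p.-1 < p ^ v)%N.
Proof.
move=> p1; elim: v => [|v IH]; first by rewrite expn0.
rewrite mulSn expnS.
have h: (1 <= p ^ v)%N by rewrite expn_gt0; case: p p1 IH.
move: (p ^ v)%N IH h => w IH h; case: p p1 IH => [|[|q]] //= _ IH.
nia.
Qed.

Lemma polyeq1 (d X : {poly rat}) (a b : nat) :
  d * a%:R * (b%:R *: X) = (b%:R * a%:R : rat) *: (d * X).
Proof. by rewrite -!mul_polyC polyCM !polyC_natr; ring. Qed.

Lemma polyeq2 (d X : {poly rat}) (u : rat) (e : nat) :
  d * (u *: X) * e%:R = (u * e%:R) *: (d * X).
Proof. by rewrite -!mul_polyC polyCM !polyC_natr; ring. Qed.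

Lemma in_ku_natr p (d : {poly rat}) (e : nat) : prime p -> in_ku p d -> in_ku p (d * e%:R).
Proof.
move=> pp /(in_kuP _ _ pp) H; apply/(in_kuP _ _ pp) => i.
rewrite mulr_natr coefMn -mulr_natr; exact: (zlocM _ _ _ pp (H i) (zloc_nat _ _ pp)).
Qed.

Lemma in_ku_mon p (d : {poly rat}) (u : rat) t : prime p -> in_ku p d -> zloc p u ->
  in_ku p (d * (u *: 'X^t)).
Proof.
move=> pp /(in_kuP _ _ pp) H zu; apply/(in_kuP _ _ pp) => i.
rewrite -scalerAr coefZ coefMXn; apply: (zlocM _ _ _ pp zu); case: ifP => _; [exact: zloc0 | exact: H].
Qed.

Lemma gen_nonpos c a (b : int) x y : b <= 0 -> gen c a b x y = 0.
Proof.
move=> hb; rewrite /gen; case: ifP => // /and4P [_ _ _ h].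
by move: (lt_le_trans h hb); rewrite ltxx.
Qed.

Lemma mainlem p n a (pp : prime p) (n1 : (0 < n)%N) : forall m k (d : {poly rat}),
  in_ku p d -> (0 < m)%N -> (m <= k.+1 * p.-1)%N ->
  tensor_zero p n (gen (d * (p ^ (n + k))%:R) a m%:Z).
Proof.
elim/ltn_ind => m IH k d Hd m0 Hm.
set c := d * (p ^ k)%:R.
have Hc : in_ku p c by apply: in_ku_natr.
have pn0 : (0 < p ^ n)%N by rewrite expn_gt0 prime_gt0.
have E : forall x y, Defs.rel p n c a m x y +
   \sum_(t < (p ^ n).-1) (- gen (c * acoef p n t.+1) a (m%:Z - t.+1%:Z) x y) =
   gen (d * (p ^ (n + k))%:R) a m%:Z x y.
  move=> x y; rewrite /Defs.rel (@sum_first _ _ (fun t => gen (c * acoef p n t) a (m%:Z - t%:Z) x y)) //.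
  rewrite sumrN addrK /acoef bin1 expr0 scaler_nat subr0 /c -mulrA -natrM -expnD addnC.
  done.
apply: (tz_ext _ _ _ _ E); apply: tzD; first exact: tz_rel.
apply: (@tz_sum p n _ (fun t x y => - gen (c * acoef p n t.+1) a (m%:Z - t.+1%:Z) x y)) => t Ht; apply: tzN => //.
case: (leqP m t.+1) => hm.
  apply: (tz_ext _ _ (fun _ _ => 0)); last exact: tz0.
  move=> x y; rewrite gen_nonpos //.
  by rewrite subr_le0 lez_nat.
rewrite subzn; last exact: ltnW.
have p1 : (1 < p)%N by apply: prime_gt1.
have [jj cj Ej] := pfactor_coprime pp (isT : (0 < t.+2)%N).
set v := logn p t.+2 in Ej.
have jj0 : (0 < jj)%N by case: jj cj Ej.
have ndj : ~~ (p %| jj)%N by rewrite -prime_coprime.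
have hpv : (p ^ v <= t.+2)%N by rewrite Ej leq_pmull.
have hb := bern p v p1.
have q0 : (0 < p.-1)%N by rewrite -subn1 subn_gt0.
have hvk : (v < k.+1)%N.
  by rewrite -(ltn_pmul2r q0); lia.
have hm' : (m - t.+1 <= (k - v).+1 * p.-1)%N.
  rewrite -subSn; last by rewrite -ltnS.
  rewrite mulnBl; lia.
set B := 'C((p ^ n).-1, t.+1).
have HB := mul_bin_diag (p ^ n) t.+1; rewrite -/B in HB.
set u : rat := (B%:Z)%:~R / (jj%:Z)%:~R.
have zu : zloc p u by apply: zloc_frac; rewrite // -lt0n.
have key : ('C(p ^ n, t.+2) * p ^ k * jj = B * p ^ (n + (k - v)))%N.
  have -> : (p ^ k = p ^ v * p ^ (k - v))%N by rewrite -expnD subnKC // -ltnS.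
  rewrite expnD; move: HB; rewrite Ej => HB.
  have : (p ^ n * B * p ^ (k - v) = t.+2 * 'C(p ^ n, t.+2) * p ^ (k - v))%N by rewrite HB Ej.
  rewrite Ej; lia.
have keyQ : ('C(p ^ n, t.+2)%:R * (p ^ k)%N%:R : rat) = u * (p ^ (n + (k - v)))%N%:R.
  rewrite /u -[(B%:Z)%:~R]/(B%:R : rat) -[(jj%:Z)%:~R]/(jj%:R : rat).
  apply: (@mulIf _ (jj%:R)); first by rewrite pnatr_eq0 -lt0n.
  rewrite [RHS]mulrAC divfK ?pnatr_eq0 -?lt0n // -!natrM; congr (_%:R); rewrite -key; lia.
apply: (@tz_ext p n (gen ((d * (u *: 'X^(t.+1))) * (p ^ (n + (k - v)))%N%:R) a (m - t.+1)%:Z)).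
  by move=> x y; rewrite /c /acoef polyeq1 polyeq2 keyQ.
apply: IH => //.
- by rewrite ltn_subrL.
- exact: in_ku_mon.
- by rewrite subn_gt0.
Qed.

Theorem lemma4p1 (p n k : nat) (a b : int) :
  prime p -> (1 <= n)%N ->
  1 <= b <= ((k.+1 * (p.-1))%N)%:Z ->
  tensor_zero p n (gen ((p ^ (n + k))%:R) a b).
Proof.
move=> pp n1 /andP [b1 bk].
case: b b1 bk => [m|m] //= b1 bk.
have := mainlem p n a pp n1 m k 1.
rewrite mul1r; apply => //.
by apply/(in_kuP _ _ pp) => i; rewrite coefC; case: ifP => _; [apply: (zloc_nat _ 1 pp) | apply: zloc0].
Qed.
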